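(* Let $I$ be an interval and let $f:I\rightarrow\mathbb{R}$ be continuous on $I$ and of class $C^1$ on the interior $\operatorname{int}I$. Then the following are equivalent: (i) $f$ is $3$-convex; (ii) $f'\left(\frac{a+b}{2}\right)\leq\frac{f(b)-f(a)}{b-a}$ for all $a<b$ in $\operatorname{int}I$; (iii) $\frac{f(b)-f(a)}{b-a}\leq\frac{1}{2}\left(\frac{f'(a)+f'(b)}{2}+f'\left(\frac{a+b}{2}\right)\right)$ for all $a<b$ in $\operatorname{int}I$.
   Context: A function $f$ defined on an interval $I$ is called $3$-convex if for all $x_0<x_1<x_2<x_3$ in $I$ the third-order divided difference $[x_0,x_1,x_2,x_3;f]=\sum_{j=0}^{3}\frac{f(x_j)}{\prod_{k\neq j}(x_j-x_k)}$ is nonnegative. *)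

(* Defs.v *)
From Stdlib Require Import Reals Lra.
From Coquelicot Require Import Coquelicot.
Open Scope R_scope.

Definition is_interval (I : R -> Prop) : Prop :=
  forall x y z, I x -> I z -> x <= y <= z -> I y.

Definition interior_of (I : R -> Prop) (x : R) : Prop :=
  exists eps : posreal, forall y, Rabs (y - x) < eps -> I y.

Definition divdiff3 (f : R -> R) (x0 x1 x2 x3 : R) : R :=
    f x0 / ((x0 - x1) * (x0 - x2) * (x0 - x3))
  + f x1 / ((x1 - x0) * (x1 - x2) * (x1 - x3))
  + f x2 / ((x2 - x0) * (x2 - x1) * (x2 - x3))
  + f x3 / ((x3 - x0) * (x3 - x1) * (x3 - x2)).

Definition convex3_on (I : R -> Prop) (f : R -> R) : Prop :=
  forall x0 x1 x2 x3, I x0 -> I x1 -> I x2 -> I x3 ->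
    x0 < x1 -> x1 < x2 -> x2 < x3 -> 0 <= divdiff3 f x0 x1 x2 x3.

Definition continuous_on_set (I : R -> Prop) (f : R -> R) : Prop :=
  forall x, I x -> filterlim f (within I (locally x)) (locally (f x)).

Definition C1_on_interior (I : R -> Prop) (f : R -> R) : Prop :=
  forall x, interior_of I x -> ex_derive f x /\ continuous (Derive f) x.

(* Main.v *)
Require Import Defs.
From Stdlib Require Import Reals Lra.
From Coquelicot Require Import Coquelicot.
Open Scope R_scope.

Lemma mvt_open (phi dphi : R -> R) (a b : R) :
  a < b -> (forall t, a <= t <= b -> is_derive phi t (dphi t)) ->
  exists c, phi b - phi a = dphi c * (b - a) /\ a < c < b.
Proof.
  intros Hab Hd. apply MVT_cor2; auto.
  intros c Hc. apply is_derive_Reals. auto.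
Qed.

Lemma incr_deriv (phi dphi : R -> R) (a b : R) :
  a <= b -> (forall t, a <= t <= b -> is_derive phi t (dphi t)) ->
  (forall t, a <= t <= b -> 0 <= dphi t) -> phi a <= phi b.
Proof.
  intros Hab Hd Hp. destruct (Req_dec a b) as [->|Hne]; [lra|].
  destruct (mvt_open phi dphi a b) as [c [Hc1 Hc2]]; [lra|auto|].
  assert (0 <= dphi c) by (apply Hp; lra). nra.
Qed.

Section Interval.
Variable I : R -> Prop.
Hypothesis HI : is_interval I.

Lemma int_in x : interior_of I x -> I x.
Proof. intros [e He]. apply He. rewrite Rminus_diag, Rabs_R0. apply cond_pos. Qed.

Lemma int_between a b c : I a -> I c -> a < b < c -> interior_of I b.
Proof.
  intros Ha Hc Hb.
  assert (He : 0 < Rmin (b - a) (c - b)) by (apply Rmin_glb_lt; lra).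
  exists (mkposreal _ He). intros y Hy. simpl in Hy.
  apply (HI a y c); auto.
  pose proof (Rmin_l (b-a) (c-b)). pose proof (Rmin_r (b-a) (c-b)).
  apply Rabs_def2 in Hy. lra.
Qed.

Lemma int_conv a b c : interior_of I a -> interior_of I c -> a <= b <= c -> interior_of I b.
Proof.
  intros Ha Hc Hb.
  destruct (Req_dec a b) as [<-|]; auto.
  destruct (Req_dec b c) as [->|]; auto.
  apply (int_between a b c); try apply int_in; auto. lra.
Qed.

Lemma int_open x : interior_of I x -> exists e, 0 < e /\ forall y, Rabs (y - x) < e -> interior_of I y.
Proof.
  intros [e He]. exists (e/2). split. pose proof (cond_pos e); lra.
  intros y Hy. assert (H2 : 0 < e/2) by (pose proof (cond_pos e); lra).
  exists (mkposreal _ H2). intros w Hw. simpl in Hw. apply He.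
  replace (w - x) with ((w - y) + (y - x)) by ring.
  eapply Rle_lt_trans. apply Rabs_triang. lra.
Qed.

End Interval.

Lemma maxp (k : R -> R) x z : x < z ->
  (forall t, x <= t <= z -> continuity_pt k t) ->
  (forall t r, 0 < r -> x <= t - r -> t + r <= z ->
     exists s1 s2, x <= s1 <= z /\ x <= s2 <= z /\ k t < (k s1 + k s2) / 2) ->
  forall y, x <= y <= z -> k y <= Rmax (k x) (k z).
Proof.
  intros Hxz Hc Hp y Hy.
  destruct (continuity_ab_maj k x z) as [M [HM HMr]]; [lra|auto|].
  destruct (Req_dec M x) as [->|Hx].
  { eapply Rle_trans. apply HM; auto. apply Rmax_l. }
  destruct (Req_dec M z) as [->|Hz].
  { eapply Rle_trans. apply HM; auto. apply Rmax_r. }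
  exfalso.
  set (r := Rmin (M - x) (z - M)).
  assert (Hr : 0 < r) by (apply Rmin_glb_lt; lra).
  pose proof (Rmin_l (M - x) (z - M)). pose proof (Rmin_r (M - x) (z - M)).
  destruct (Hp M r) as [s1 [s2 [H1 [H2 H3]]]]; auto; try (unfold r; lra).
  pose proof (HM s1 H1). pose proof (HM s2 H2). lra.
Qed.

Definition Cvx (J : R -> Prop) (g : R -> R) : Prop :=
  forall x y z, J x -> J z -> x < y < z ->
    g y * (z - x) <= (z - y) * g x + (y - x) * g z.

Lemma cvx_from (J : R -> Prop) (g : R -> R)
  (Jc : forall a b c, J a -> J c -> a <= b <= c -> J b)
  (gc : forall t, J t -> continuity_pt g t)
  (H : forall x z eps, J x -> J z -> x < z -> 0 < eps ->
     forall t r, 0 < r -> x <= t - r -> t + r <= z ->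
     exists s1 s2, x <= s1 <= z /\ x <= s2 <= z /\
       (g t - (g x + (t - x) * (g z - g x) / (z - x)) + eps * (t - x) * (t - z))
       < ((g s1 - (g x + (s1 - x) * (g z - g x) / (z - x)) + eps * (s1 - x) * (s1 - z))
        + (g s2 - (g x + (s2 - x) * (g z - g x) / (z - x)) + eps * (s2 - x) * (s2 - z))) / 2) :
  Cvx J g.
Proof.
  intros x y z Hx Hz Hxyz.
  destruct (Rle_or_lt (g y * (z - x)) ((z - y) * g x + (y - x) * g z)) as [Hle|Hlt]; auto.
  exfalso.
  set (V := g y * (z - x) - ((z - y) * g x + (y - x) * g z)).
  assert (HV : 0 < V) by (unfold V; lra).
  set (eps := V / (2 * (z - x) * (y - x) * (z - y))).
  assert (Heps : 0 < eps).
  { unfold eps. apply Rdiv_lt_0_compat; auto.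
    apply Rmult_lt_0_compat; [apply Rmult_lt_0_compat|]; lra. }
  set (k := fun t => g t - (g x + (t - x) * (g z - g x) / (z - x)) + eps * (t - x) * (t - z)).
  assert (Hk := maxp k x z ltac:(lra)).
  assert (Hky := Hk ltac:(intros t Ht; unfold k;
     apply continuity_pt_plus; [apply continuity_pt_minus|];
     [apply gc; apply (Jc x t z); auto | reg | reg])
     (H x z eps Hx Hz ltac:(lra) Heps) y ltac:(lra)).
  unfold k in Hky.
  replace (x - x) with 0 in Hky by ring.
  replace (z - z) with 0 in Hky by ring.
  replace (g x - (g x + 0 * (g z - g x) / (z - x)) + eps * 0 * (x - z)) with 0 in Hky by (field; lra).
  replace (g z - (g x + (z - x) * (g z - g x) / (z - x)) + eps * (z - x) * 0) with 0 in Hky by (field; lra).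
  rewrite Rmax_left in Hky by lra.
  assert (Hval : g y - (g x + (y - x) * (g z - g x) / (z - x)) + eps * (y - x) * (y - z)
     = V / (2 * (z - x))).
  { unfold eps, V. field. repeat split; lra. }
  rewrite Hval in Hky.
  assert (0 < V / (2 * (z - x))) by (apply Rdiv_lt_0_compat; lra). lra.
Qed.

Lemma mid_cvx (J : R -> Prop) (g : R -> R)
  (Jc : forall a b c, J a -> J c -> a <= b <= c -> J b)
  (gc : forall t, J t -> continuity_pt g t)
  (Hm : forall t r, 0 < r -> J (t - r) -> J (t + r) -> g t <= (g (t - r) + g (t + r)) / 2) :
  Cvx J g.
Proof.
  apply cvx_from; auto.
  intros x z eps Hx Hz Hxz He t r Hr H1 H2.
  exists (t - r), (t + r). split; [lra|]. split; [lra|].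
  assert (g t <= (g (t - r) + g (t + r)) / 2).
  { apply Hm; auto; apply (Jc x _ z); auto; lra. }
  assert (0 < eps * r * r) by (apply Rmult_lt_0_compat; nra).
  assert (E : ((g (t - r) - (g x + (t - r - x) * (g z - g x) / (z - x)) + eps * (t - r - x) * (t - r - z))
     + (g (t + r) - (g x + (t + r - x) * (g z - g x) / (z - x)) + eps * (t + r - x) * (t + r - z))) / 2
     = (g (t - r) + g (t + r)) / 2 - (g x + (t - x) * (g z - g x) / (z - x)) + eps * (t - x) * (t - z) + eps * r * r).
  { field. lra. }
  rewrite E. lra.
Qed.

Section S.
Variable I : R -> Prop.
Variable f : R -> R.
Hypothesis HI : is_interval I.
Hypothesis HC1 : C1_on_interior I f.
Let J := interior_of I.

Lemma Jc : forall a b c, J a -> J c -> a <= b <= c -> J b.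
Proof. intros a b c Ha Hc Hb; apply (int_conv I HI a b c); auto. Qed.

Lemma gcont : forall t, J t -> continuity_pt (Derive f) t.
Proof. intros t Ht. apply continuity_pt_filterlim. apply (HC1 t Ht). Qed.

Lemma fder : forall t, J t -> ex_derive f t.
Proof. intros t Ht. apply (HC1 t Ht). Qed.

Lemma ii_cvx :
  (forall a b, J a -> J b -> a < b -> Derive f ((a + b) / 2) <= (f b - f a) / (b - a)) ->
  Cvx J (Derive f).
Proof.
  intros Hii. apply cvx_from; [exact Jc|exact gcont|].
  intros x z eps Hx Hz Hxz He t r Hr H1 H2.
  set (g := Derive f).
  set (k := fun s => g s - (g x + (s - x) * (g z - g x) / (z - x)) + eps * (s - x) * (s - z)).
  set (G := fun s => f s - (g x * s + (g z - g x) / (z - x) * ((s - x) * (s - x)) / 2)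
          + eps * (s * s * s / 3 - (x + z) * (s * s) / 2 + x * z * s)).
  assert (HG : forall s, x <= s <= z -> is_derive G s (k s)).
  { intros s Hs. unfold G, k.
    assert (Hf : ex_derive f s) by (apply fder; apply (Jc x s z); auto).
    auto_derive; auto. change (Derive (fun x0 : R => f x0) s) with (g s). field. lra. }
  destruct (mvt_open G k (t - r) t) as [c1 [E1 Hc1]]; [lra| intros; apply HG; lra |].
  destruct (mvt_open G k t (t + r)) as [c2 [E2 Hc2]]; [lra| intros; apply HG; lra |].
  exists c1, c2. split; [lra|]. split; [lra|].
  fold (k t). fold (k c1). fold (k c2).
  assert (Hm : g t <= (f (t + r) - f (t - r)) / (t + r - (t - r))).
  { replace t with ((t - r + (t + r)) / 2) at 1 by field.
    apply Hii; try (apply (Jc x _ z); auto; lra). lra. }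
  assert (Hsum : (k c1 + k c2) / 2 = (G (t + r) - G (t - r)) / (2 * r)).
  { field_simplify_eq; [|lra]. replace (t - (t - r)) with r in E1 by ring.
    replace (t + r - t) with r in E2 by ring. nra. }
  rewrite Hsum.
  assert (E : (G (t + r) - G (t - r)) / (2 * r) =
     (f (t + r) - f (t - r)) / (t + r - (t - r)) - (g x + (t - x) * (g z - g x) / (z - x))
     + eps * (t - x) * (t - z) + eps * (r * r) / 3).
  { unfold G. field. lra. }
  rewrite E. unfold k.
  assert (0 < eps * (r * r) / 3) by (apply Rdiv_lt_0_compat; [apply Rmult_lt_0_compat|]; nra).
  lra.
Qed.

End S.

Lemma cvx_ns (J : R -> Prop) g : Cvx J g -> forall x y z, J x -> J z -> x <= y <= z ->
  g y * (z - x) <= (z - y) * g x + (y - x) * g z.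
Proof.
  intros H x y z Hx Hz Hy.
  destruct (Req_dec y x) as [->|]. { right; ring. }
  destruct (Req_dec y z) as [->|]. { right; ring. }
  apply H; auto; lra.
Qed.

Ltac fixD g := unfold g in *;
  repeat match goal with |- context [Derive (fun x => ?F x) ?y] =>
    change (Derive (fun x => F x) y) with (Derive F y) end; unfold Rminus.

Section S.
Variable I : R -> Prop.
Variable f : R -> R.
Hypothesis HI : is_interval I.
Hypothesis HC1 : C1_on_interior I f.
Let J := interior_of I.

Lemma cvx_ii : Cvx J (Derive f) ->
  forall a b, J a -> J b -> a < b -> Derive f ((a + b) / 2) <= (f b - f a) / (b - a).
Proof.
  intros Hc a b Ha Hb Hab.
  set (g := Derive f). set (m := (a + b) / 2). set (r := (b - a) / 2).
  set (psi := fun t => f (m + t) - f (m - t) - 2 * t * g m).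
  assert (Hin : forall t, 0 <= t <= r -> J (m + t) /\ J (m - t)).
  { intros t Ht; split; apply (Jc I HI a _ b); auto; unfold m, r in *; lra. }
  assert (H := incr_deriv psi (fun t => g (m + t) + g (m - t) - 2 * g m) 0 r).
  assert (Hle : psi 0 <= psi r).
  { apply H. unfold r; lra.
    - intros t Ht. destruct (Hin t Ht) as [H1 H2]. unfold psi.
      assert (ex_derive f (m + t)) by (apply (fder I f HC1); auto).
      assert (ex_derive f (m - t)) by (apply (fder I f HC1); auto).
      auto_derive; auto.
      fixD g. ring.
    - intros t Ht. destruct (Hin t Ht) as [H1 H2].
      pose proof (cvx_ns J g Hc (m - t) m (m + t) H2 H1 ltac:(lra)) as Hq.
      destruct (Req_dec t 0) as [->|Ht0].
      { replace (m + 0) with m by ring. replace (m - 0) with m by ring. lra. }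
      apply (Rmult_le_reg_l t). lra.
      replace (m + t - (m - t)) with (2 * t) in Hq by ring.
      replace (m + t - m) with t in Hq by ring.
      replace (m - (m - t)) with t in Hq by ring. nra. }
  unfold psi in Hle.
  replace (m + 0) with m in Hle by ring. replace (m - 0) with m in Hle by ring.
  replace (m + r) with b in Hle by (unfold m, r; field).
  replace (m - r) with a in Hle by (unfold m, r; field).
  apply (Rmult_le_reg_r (b - a)). lra. unfold Rdiv. rewrite Rmult_assoc, Rinv_l by lra.
  unfold r in Hle. fold m. lra.
Qed.

Lemma cvx_trap : Cvx J (Derive f) ->
  forall u v, J u -> J v -> u < v -> f v - f u <= (v - u) * (Derive f u + Derive f v) / 2.
Proof.
  intros Hc u v Hu Hv Huv.
  set (g := Derive f). set (c := (u + v) / 2). set (r := (v - u) / 2).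
  set (psi := fun t => t * (g u + g v) - (f (c + t) - f (c - t))).
  assert (Hin : forall t, 0 <= t <= r -> J (c + t) /\ J (c - t)).
  { intros t Ht; split; apply (Jc I HI u _ v); auto; unfold c, r in *; lra. }
  assert (H := incr_deriv psi (fun t => g u + g v - g (c + t) - g (c - t)) 0 r).
  assert (Hle : psi 0 <= psi r).
  { apply H. unfold r; lra.
    - intros t Ht. destruct (Hin t Ht) as [H1 H2]. unfold psi.
      assert (ex_derive f (c + t)) by (apply (fder I f HC1); auto).
      assert (ex_derive f (c - t)) by (apply (fder I f HC1); auto).
      auto_derive; auto.
      fixD g. ring.
    - intros t Ht. destruct (Hin t Ht) as [H1 H2].
      pose proof (cvx_ns J g Hc u (c + t) v Hu Hv ltac:(unfold c, r in *; lra)).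
      pose proof (cvx_ns J g Hc u (c - t) v Hu Hv ltac:(unfold c, r in *; lra)).
      replace (v - u) with (2 * r) in * by (unfold r; field).
      replace (v - (c + t)) with (r - t) in * by (unfold c, r; field).
      replace (c + t - u) with (r + t) in * by (unfold c, r; field).
      replace (v - (c - t)) with (r + t) in * by (unfold c, r; field).
      replace (c - t - u) with (r - t) in * by (unfold c, r; field).
      assert (Hr : 0 < r) by (unfold r; lra). nra. }
  unfold psi in Hle.
  replace (c + 0) with c in Hle by ring. replace (c - 0) with c in Hle by ring.
  replace (c + r) with v in Hle by (unfold c, r; field).
  replace (c - r) with u in Hle by (unfold c, r; field).
  unfold r in Hle. fold g. lra.
Qed.

Lemma cvx_iii : Cvx J (Derive f) ->
  forall a b, J a -> J b -> a < b ->
   (f b - f a) / (b - a) <= / 2 * ((Derive f a + Derive f b) / 2 + Derive f ((a + b) / 2)).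
Proof.
  intros Hc a b Ha Hb Hab.
  set (m := (a + b) / 2).
  assert (Hm : J m) by (apply (Jc I HI a m b); auto; unfold m; lra).
  pose proof (cvx_trap Hc a m Ha Hm ltac:(unfold m; lra)).
  pose proof (cvx_trap Hc m b Hm Hb ltac:(unfold m; lra)).
  apply (Rmult_le_reg_r (b - a)). lra. unfold Rdiv. rewrite Rmult_assoc, Rinv_l by lra.
  replace (m - a) with ((b - a) / 2) in * by (unfold m; field).
  replace (b - m) with ((b - a) / 2) in * by (unfold m; field).
  lra.
Qed.
End S.


Section S.
Variable I : R -> Prop.
Variable f : R -> R.
Hypothesis HI : is_interval I.
Hypothesis HC1 : C1_on_interior I f.
Let J := interior_of I.

Lemma cvx_i_J : Cvx J (Derive f) ->
  forall p q r s, J p -> J s -> p < q -> q < r -> r < s -> 0 <= divdiff3 f p q r s.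
Proof.
  intros Hc p q r s Hp Hs Hpq Hqr Hrs.
  set (g := Derive f).
  set (D := divdiff3 f p q r s).
  set (A1 := (f q - f p) / (q - p)).
  set (A2 := (f r - f q) / (r - q)).
  set (S := (A2 - A1) / (r - p)).
  set (k := fun t => f t - (f p + A1 * (t - p) + S * (t - p) * (t - q)) - D * ((t - p) * (t - q) * (t - r))).
  set (P := fun t => A1 + S * (2 * t - p - q) + D * ((t - q) * (t - r) + (t - p) * (t - r) + (t - p) * (t - q))).
  set (dk := fun t => g t - P t).
  assert (Hd : forall t, p <= t <= s -> is_derive k t (dk t)).
  { intros t Ht. assert (ex_derive f t) by (apply (fder I f HC1); apply (Jc I HI p t s); auto).
    unfold k, dk, P. auto_derive; auto. fixD g. ring. }
  assert (kp : k p = 0) by (unfold k; ring).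
  assert (kq : k q = 0) by (unfold k, A1; field; lra).
  assert (kr : k r = 0) by (unfold k, S, A1, A2; field; lra).
  assert (ks : k s = 0) by (unfold k, S, A1, A2, D, divdiff3; field; repeat split; lra).
  destruct (mvt_open k dk p q) as [x1 [E1 H1]]; [lra|intros; apply Hd; lra|].
  destruct (mvt_open k dk q r) as [x2 [E2 H2]]; [lra|intros; apply Hd; lra|].
  destruct (mvt_open k dk r s) as [x3 [E3 H3]]; [lra|intros; apply Hd; lra|].
  rewrite kp, kq in E1. rewrite kq, kr in E2. rewrite kr, ks in E3.
  assert (Z1 : dk x1 = 0) by (apply (Rmult_eq_reg_r (q - p)); lra).
  assert (Z2 : dk x2 = 0) by (apply (Rmult_eq_reg_r (r - q)); lra).
  assert (Z3 : dk x3 = 0) by (apply (Rmult_eq_reg_r (s - r)); lra).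
  unfold dk in Z1, Z2, Z3.
  assert (HJ1 : J x1) by (apply (Jc I HI p x1 s); auto; lra).
  assert (HJ3 : J x3) by (apply (Jc I HI p x3 s); auto; lra).
  pose proof (Hc x1 x2 x3 HJ1 HJ3 ltac:(lra)) as Hcv. fold g in Hcv.
  replace (g x1) with (P x1) in Hcv by lra.
  replace (g x2) with (P x2) in Hcv by lra.
  replace (g x3) with (P x3) in Hcv by lra.
  unfold P in Hcv.
  assert (Hid : P x2 * (x3 - x1) - ((x3 - x2) * P x1 + (x2 - x1) * P x3)
     = - 3 * D * ((x3 - x2) * (x2 - x1) * (x3 - x1))).
  { unfold P. ring. }
  unfold P in Hid.
  assert (0 < (x3 - x2) * (x2 - x1) * (x3 - x1)) by
    (apply Rmult_lt_0_compat; [apply Rmult_lt_0_compat|]; lra).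
  nra.
Qed.
End S.

Definition conv0 (u : R -> R) (U : R) : Prop :=
  forall eps, 0 < eps -> exists d, 0 < d /\ forall e, 0 < e < d -> Rabs (u e - U) < eps.

Lemma conv0_ext u v U d0 : 0 < d0 -> (forall e, 0 < e < d0 -> u e = v e) -> conv0 u U -> conv0 v U.
Proof.
  intros Hd0 H Hu eps He. destruct (Hu eps He) as [d [Hd Hd2]]. exists (Rmin d d0); split.
  apply Rmin_glb_lt; auto.
  intros e He'. pose proof (Rmin_l d d0). pose proof (Rmin_r d d0). rewrite <- H by lra. apply Hd2; lra.
Qed.

Lemma conv0_const c : conv0 (fun _ => c) c.
Proof. intros eps He. exists 1; split; [lra|]. intros. rewrite Rminus_diag, Rabs_R0; auto. Qed.

Lemma conv0_plus u v U V : conv0 u U -> conv0 v V -> conv0 (fun e => u e + v e) (U + V).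
Proof.
  intros Hu Hv eps He.
  destruct (Hu (eps/2) ltac:(lra)) as [d1 [Hd1 H1]].
  destruct (Hv (eps/2) ltac:(lra)) as [d2 [Hd2 H2]].
  exists (Rmin d1 d2). split. apply Rmin_glb_lt; auto.
  intros e He'. pose proof (Rmin_l d1 d2). pose proof (Rmin_r d1 d2).
  replace (u e + v e - (U + V)) with ((u e - U) + (v e - V)) by ring.
  eapply Rle_lt_trans. apply Rabs_triang.
  pose proof (H1 e ltac:(lra)). pose proof (H2 e ltac:(lra)). lra.
Qed.

Lemma conv0_scal u U k : conv0 u U -> conv0 (fun e => u e * k) (U * k).
Proof.
  intros Hu eps He.
  assert (Hk : 0 < Rabs k + 1) by (pose proof (Rabs_pos k); lra).
  destruct (Hu (eps / (Rabs k + 1)) ltac:(apply Rdiv_lt_0_compat; lra)) as [d [Hd H1]].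
  exists d; split; auto. intros e He'.
  replace (u e * k - U * k) with ((u e - U) * k) by ring.
  rewrite Rabs_mult. pose proof (H1 e He'). pose proof (Rabs_pos (u e - U)).
  pose proof (Rabs_pos k).
  apply Rle_lt_trans with (Rabs (u e - U) * (Rabs k + 1)). nra.
  apply (Rmult_lt_compat_r (Rabs k + 1)) in H; auto.
  unfold Rdiv in H. rewrite Rmult_assoc, Rinv_l in H by lra. lra.
Qed.

Lemma conv0_mult u v U V : conv0 u U -> conv0 v V -> conv0 (fun e => u e * v e) (U * V).
Proof.
  intros Hu Hv eps He.
  set (B := Rabs V + 1). assert (HB : 0 < B) by (unfold B; pose proof (Rabs_pos V); lra).
  set (C := Rabs U + 1). assert (HC : 0 < C) by (unfold C; pose proof (Rabs_pos U); lra).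
  destruct (Hu (Rmin 1 (eps / (2 * B))) ltac:(apply Rmin_glb_lt; [lra|apply Rdiv_lt_0_compat; lra])) as [d1 [Hd1 H1]].
  destruct (Hv (Rmin 1 (eps / (2 * C))) ltac:(apply Rmin_glb_lt; [lra|apply Rdiv_lt_0_compat; lra])) as [d2 [Hd2 H2]].
  exists (Rmin d1 d2). split. apply Rmin_glb_lt; auto.
  intros e He'. pose proof (Rmin_l d1 d2). pose proof (Rmin_r d1 d2).
  specialize (H1 e ltac:(lra)). specialize (H2 e ltac:(lra)).
  pose proof (Rmin_l 1 (eps / (2 * B))). pose proof (Rmin_r 1 (eps / (2 * B))).
  pose proof (Rmin_l 1 (eps / (2 * C))). pose proof (Rmin_r 1 (eps / (2 * C))).
  replace (u e * v e - U * V) with ((u e - U) * v e + U * (v e - V)) by ring.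
  eapply Rle_lt_trans. apply Rabs_triang. rewrite !Rabs_mult.
  assert (Hve : Rabs (v e) <= B).
  { unfold B. replace (v e) with ((v e - V) + V) by ring.
    eapply Rle_trans. apply Rabs_triang. lra. }
  assert (Ha : Rabs (u e - U) * Rabs (v e) <= eps / (2 * B) * B).
  { apply Rmult_le_compat; try apply Rabs_pos; lra. }
  replace (eps / (2 * B) * B) with (eps / 2) in Ha by (field; lra).
  assert (Hb' : Rabs U * Rabs (v e - V) < eps / 2).
  { apply Rle_lt_trans with (Rabs U * (eps / (2 * C))).
    apply Rmult_le_compat_l; [apply Rabs_pos|lra].
    replace (eps / 2) with (C * (eps / (2 * C))) by (field; lra).
    apply Rmult_lt_compat_r. apply Rdiv_lt_0_compat; lra. unfold C; lra. }
  lra.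
Qed.

Lemma conv0_le u v U V : conv0 u U -> conv0 v V ->
  (exists d0, 0 < d0 /\ forall e, 0 < e < d0 -> u e <= v e) -> U <= V.
Proof.
  intros Hu Hv [d0 [Hd0 Huv]].
  destruct (Rle_or_lt U V) as [|Hlt]; auto. exfalso.
  destruct (Hu ((U - V)/2) ltac:(lra)) as [d1 [Hd1 H1]].
  destruct (Hv ((U - V)/2) ltac:(lra)) as [d2 [Hd2 H2]].
  set (e := Rmin d0 (Rmin d1 d2) / 2).
  assert (He : 0 < Rmin d0 (Rmin d1 d2)) by (repeat apply Rmin_glb_lt; auto).
  pose proof (Rmin_l d0 (Rmin d1 d2)). pose proof (Rmin_r d0 (Rmin d1 d2)).
  pose proof (Rmin_l d1 d2). pose proof (Rmin_r d1 d2).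
  specialize (H1 e ltac:(unfold e; lra)). specialize (H2 e ltac:(unfold e; lra)).
  specialize (Huv e ltac:(unfold e; lra)).
  apply Rabs_def2 in H1. apply Rabs_def2 in H2. lra.
Qed.

Lemma conv0_cont (phi : R -> R) a : continuity_pt phi a -> conv0 (fun e => phi (a + e)) (phi a).
Proof.
  intros Hc eps He. destruct (Hc eps He) as [d [Hd H]].
  exists d; split; auto. intros e He'. apply (H (a + e)). split.
  - unfold D_x, no_cond. split; auto. lra.
  - simpl. unfold R_dist. replace (a + e - a) with e by ring. rewrite Rabs_right; lra.
Qed.

Lemma conv0_cont_m (phi : R -> R) a : continuity_pt phi a -> conv0 (fun e => phi (a - e)) (phi a).
Proof.
  intros Hc eps He. destruct (Hc eps He) as [d [Hd H]].
  exists d; split; auto. intros e He'. apply (H (a - e)). split.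
  - unfold D_x, no_cond. split; auto. lra.
  - simpl. unfold R_dist. replace (a - e - a) with (- e) by ring. rewrite Rabs_Ropp, Rabs_right; lra.
Qed.

Lemma conv0_exd (phi : R -> R) a : ex_derive phi a -> conv0 (fun e => phi (a + e)) (phi a).
Proof. intros H. apply conv0_cont. apply continuity_pt_filterlim. exact (@ex_derive_continuous R_AbsRing R_NormedModule phi a H). Qed.

Lemma conv0_exd_m (phi : R -> R) a : ex_derive phi a -> conv0 (fun e => phi (a - e)) (phi a).
Proof. intros H. apply conv0_cont_m. apply continuity_pt_filterlim. exact (@ex_derive_continuous R_AbsRing R_NormedModule phi a H). Qed.

Lemma conv0_dq (f : R -> R) x : ex_derive f x -> conv0 (fun e => (f (x + e) - f x) / e) (Derive f x).
Proof.
  intros H eps He. apply Derive_correct in H. apply is_derive_Reals in H.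
  destruct (H eps He) as [d Hd]. exists d; split; [apply cond_pos|].
  intros e He'. apply Hd. lra. rewrite Rabs_right; lra.
Qed.

Lemma conv0_dqm (f : R -> R) x : ex_derive f x -> conv0 (fun e => (f x - f (x - e)) / e) (Derive f x).
Proof.
  intros H eps He. apply Derive_correct in H. apply is_derive_Reals in H.
  destruct (H eps He) as [d Hd]. exists d; split; [apply cond_pos|].
  intros e He'. specialize (Hd (- e) ltac:(lra) ltac:(rewrite Rabs_Ropp, Rabs_right; lra)).
  replace ((f x - f (x - e)) / e) with ((f (x + - e) - f x) / - e). auto.
  unfold Rminus. field. lra.
Qed.

Definition Sdd (f : R -> R) a b c := ((f c - f b) / (c - b) - (f b - f a) / (b - a)) / (c - a).

Lemma convA (f : R -> R) a b : a < b -> ex_derive f a ->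
  conv0 (fun e => Sdd f a (a + e) b) (((f b - f a) / (b - a) - Derive f a) / (b - a)).
Proof.
  intros Hab Hd.
  set (phi := fun t => (f b - f t) / (b - t)).
  assert (H1 : conv0 (fun e => phi (a + e)) (phi a)).
  { apply conv0_exd. unfold phi. auto_derive. repeat split; auto. lra. }
  assert (H2 := conv0_scal _ _ (-1) (conv0_dq f a Hd)).
  assert (H3 := conv0_scal _ _ (/ (b - a)) (conv0_plus _ _ _ _ H1 H2)).
  replace (((f b - f a) / (b - a) - Derive f a) / (b - a)) with ((phi a + Derive f a * -1) * / (b - a))
    by (unfold phi; field; lra).
  refine (conv0_ext _ _ _ (b - a) _ _ H3); [lra|].
  intros e He. simpl. unfold Sdd, phi. replace (a + e - a) with e by ring. field. repeat split; lra.
Qed.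

Lemma convB (f : R -> R) a b : a < b -> ex_derive f b ->
  conv0 (fun e => Sdd f a (b - e) b) ((Derive f b - (f b - f a) / (b - a)) / (b - a)).
Proof.
  intros Hab Hd.
  set (phi := fun t => (f t - f a) / (t - a)).
  assert (H1 : conv0 (fun e => phi (b - e)) (phi b)).
  { apply conv0_exd_m. unfold phi. auto_derive. repeat split; auto. lra. }
  assert (H2 := conv0_scal _ _ (-1) H1).
  assert (H3 := conv0_scal _ _ (/ (b - a)) (conv0_plus _ _ _ _ (conv0_dqm f b Hd) H2)).
  replace ((Derive f b - (f b - f a) / (b - a)) / (b - a)) with ((Derive f b + phi b * -1) * / (b - a))
    by (unfold phi; field; lra).
  refine (conv0_ext _ _ _ (b - a) _ _ H3); [lra|].
  intros e He. simpl. unfold Sdd, phi. replace (b - (b - e)) with e by ring. field. repeat split; lra.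
Qed.

Section S.
Variable I : R -> Prop.
Variable f : R -> R.
Hypothesis HI : is_interval I.
Hypothesis HC1 : C1_on_interior I f.
Let J := interior_of I.

Lemma lem4 : convex3_on I f -> forall p q r s, I p -> I q -> I r -> I s ->
  p < q -> q < r -> r < s -> Sdd f p q r <= Sdd f q r s.
Proof.
  intros H p q r s Hp Hq Hr Hs H1 H2 H3.
  pose proof (H p q r s Hp Hq Hr Hs H1 H2 H3) as Hd.
  assert (E : divdiff3 f p q r s = (Sdd f q r s - Sdd f p q r) / (s - p)).
  { unfold divdiff3, Sdd. field. repeat split; lra. }
  rewrite E in Hd.
  apply Rmult_le_compat_r with (r := s - p) in Hd; [|lra].
  unfold Rdiv in Hd. rewrite Rmult_0_l, Rmult_assoc, Rinv_l, Rmult_1_r in Hd by lra. lra.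
Qed.

Lemma lem5 : convex3_on I f -> forall p0 p1 p2 p3 p4, I p0 -> I p4 ->
  p0 < p1 -> p1 < p2 -> p2 < p3 -> p3 < p4 -> Sdd f p0 p1 p2 <= Sdd f p2 p3 p4.
Proof.
  intros H p0 p1 p2 p3 p4 H0 H4 ? ? ? ?.
  assert (I p1) by (apply (HI p0 p1 p4); auto; lra).
  assert (I p2) by (apply (HI p0 p2 p4); auto; lra).
  assert (I p3) by (apply (HI p0 p3 p4); auto; lra).
  apply Rle_trans with (Sdd f p1 p2 p3); apply lem4; auto.
Qed.

Lemma i_cvx : convex3_on I f -> Cvx J (Derive f).
Proof.
  intros H x y z Hx Hz Hxyz.
  assert (Hy : J y) by (apply (Jc I HI x y z); auto; lra).
  assert (Ix := int_in I x Hx). assert (Iz := int_in I z Hz).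
  assert (Dx := fder I f HC1 x Hx). assert (Dy := fder I f HC1 y Hy). assert (Dz := fder I f HC1 z Hz).
  set (d0 := Rmin (y - x) (z - y)).
  assert (Hd0 : 0 < d0) by (apply Rmin_glb_lt; lra).
  pose proof (Rmin_l (y - x) (z - y)). pose proof (Rmin_r (y - x) (z - y)).
  assert (L1 := conv0_le _ _ _ _ (convA f x y ltac:(lra) Dx) (convA f y z ltac:(lra) Dy)
     ltac:(exists d0; split; auto; intros e He; apply lem5; auto; unfold d0 in *; lra)).
  assert (L2 := conv0_le _ _ _ _ (convB f x y ltac:(lra) Dy) (convB f y z ltac:(lra) Dz)
     ltac:(exists d0; split; auto; intros e He; apply lem5; auto; unfold d0 in *; lra)).
  set (g := Derive f) in *.
  set (Axy := (f y - f x) / (y - x)) in *. set (Ayz := (f z - f y) / (z - y)) in *.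
  assert (E : (g y - g x) / (y - x) <= (g z - g y) / (z - y)).
  { replace ((g y - g x) / (y - x)) with ((Axy - g x) / (y - x) + (g y - Axy) / (y - x)) by (field; lra).
    replace ((g z - g y) / (z - y)) with ((Ayz - g y) / (z - y) + (g z - Ayz) / (z - y)) by (field; lra).
    lra. }
  apply Rmult_le_compat_r with (r := (y - x) * (z - y)) in E; [|apply Rmult_le_pos; lra].
  replace ((g y - g x) / (y - x) * ((y - x) * (z - y))) with ((g y - g x) * (z - y)) in E by (field; lra).
  replace ((g z - g y) / (z - y) * ((y - x) * (z - y))) with ((g z - g y) * (y - x)) in E by (field; lra).
  nra.
Qed.
End S.

Lemma conv0_within (I : R -> Prop) (f : R -> R) x0 d1 :
  filterlim f (within I (locally x0)) (locally (f x0)) -> 0 < d1 ->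
  (forall e, 0 < e < d1 -> I (x0 + e)) -> conv0 (fun e => f (x0 + e)) (f x0).
Proof.
  intros Hf Hd1 HI eps He.
  apply filterlim_locally with (eps := mkposreal _ He) in Hf.
  destruct Hf as [d Hd].
  exists (Rmin d d1). split. apply Rmin_glb_lt; auto. apply cond_pos.
  intros e He'. pose proof (Rmin_l d d1). pose proof (Rmin_r d d1).
  specialize (Hd (x0 + e)).
  assert (Hb : ball x0 d (x0 + e)).
  { unfold ball; simpl; unfold AbsRing_ball, abs, minus, plus, opp; simpl.
    replace (x0 + e + - x0) with e by ring. rewrite Rabs_right; lra. }
  specialize (Hd Hb (HI e ltac:(lra))).
  unfold ball in Hd; simpl in Hd; unfold AbsRing_ball, abs, minus, plus, opp in Hd; simpl in Hd.
  exact Hd.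
Qed.

Lemma conv0_within_m (I : R -> Prop) (f : R -> R) x0 d1 :
  filterlim f (within I (locally x0)) (locally (f x0)) -> 0 < d1 ->
  (forall e, 0 < e < d1 -> I (x0 - e)) -> conv0 (fun e => f (x0 - e)) (f x0).
Proof.
  intros Hf Hd1 HI eps He.
  apply filterlim_locally with (eps := mkposreal _ He) in Hf.
  destruct Hf as [d Hd].
  exists (Rmin d d1). split. apply Rmin_glb_lt; auto. apply cond_pos.
  intros e He'. pose proof (Rmin_l d d1). pose proof (Rmin_r d d1).
  specialize (Hd (x0 - e)).
  assert (Hb : ball x0 d (x0 - e)).
  { unfold ball; simpl; unfold AbsRing_ball, abs, minus, plus, opp; simpl.
    replace (x0 - e + - x0) with (- e) by ring. rewrite Rabs_Ropp, Rabs_right; lra. }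
  specialize (Hd Hb (HI e ltac:(lra))).
  unfold ball in Hd; simpl in Hd; unfold AbsRing_ball, abs, minus, plus, opp in Hd; simpl in Hd.
  exact Hd.
Qed.


Lemma HE (f : R -> R) (x0 x1 x2 x3 : R) : x0 < x1 -> x1 < x2 -> x2 < x3 -> divdiff3 f x0 x1 x2 x3 =
  f x0 * / ((x0 - x1) * (x0 - x2) * (x0 - x3)) + (f x1 / ((x1 - x0) * (x1 - x2) * (x1 - x3))
    + f x2 / ((x2 - x0) * (x2 - x1) * (x2 - x3)) + f x3 / ((x3 - x0) * (x3 - x1) * (x3 - x2))).
Proof. intros. unfold divdiff3. field. repeat split; lra. Qed.

Lemma HE3 (f : R -> R) (x0 x1 x2 x3 : R) : x0 < x1 -> x1 < x2 -> x2 < x3 -> divdiff3 f x0 x1 x2 x3 =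
  f x3 * / ((x3 - x0) * (x3 - x1) * (x3 - x2)) + (f x0 / ((x0 - x1) * (x0 - x2) * (x0 - x3))
    + f x1 / ((x1 - x0) * (x1 - x2) * (x1 - x3)) + f x2 / ((x2 - x0) * (x2 - x1) * (x2 - x3))).
Proof. intros. unfold divdiff3. field. repeat split; lra. Qed.

Ltac nz := repeat split; try lra;
  repeat apply Rmult_integral_contrapositive_currified; try lra.

Section S.
Variable I : R -> Prop.
Variable f : R -> R.
Hypothesis HI : is_interval I.
Hypothesis Hcont : continuous_on_set I f.
Hypothesis HC1 : C1_on_interior I f.
Let J := interior_of I.

Lemma step1 : Cvx J (Derive f) -> forall x0 x1 x2 x3, I x0 -> J x3 ->
  x0 < x1 -> x1 < x2 -> x2 < x3 -> 0 <= divdiff3 f x0 x1 x2 x3.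
Proof.
  intros Hc x0 x1 x2 x3 H0 H3 ? ? ?.
  assert (I3 := int_in I x3 H3).
  assert (HJ : forall e, 0 < e < x1 - x0 -> J (x0 + e)).
  { intros e He. apply (int_between I HI x0 _ x3); auto. lra. }
  set (al := fun t => / ((t - x1) * (t - x2) * (t - x3))).
  set (be := fun t => f x1 / ((x1 - t) * (x1 - x2) * (x1 - x3))
    + f x2 / ((x2 - t) * (x2 - x1) * (x2 - x3)) + f x3 / ((x3 - t) * (x3 - x1) * (x3 - x2))).
  assert (Ha : conv0 (fun e => al (x0 + e)) (al x0)).
  { apply conv0_exd. unfold al. auto_derive. nz. }
  assert (Hb : conv0 (fun e => be (x0 + e)) (be x0)).
  { apply conv0_exd. unfold be. auto_derive. nz. }
  assert (Hf : conv0 (fun e => f (x0 + e)) (f x0)).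
  { apply (conv0_within I f x0 (x1 - x0)); [apply Hcont; auto|lra|].
    intros e He. apply int_in. apply HJ; auto. }
  assert (Hall := conv0_plus _ _ _ _ (conv0_mult _ _ _ _ Hf Ha) Hb).
  simpl in Hall.
  rewrite (HE f x0 x1 x2 x3) by lra.
  apply (conv0_le (fun _ => 0) _ 0 _ (conv0_const 0) Hall).
  exists (x1 - x0). split; [lra|]. intros e He.
  pose proof (cvx_i_J I f HI HC1 Hc (x0 + e) x1 x2 x3 ltac:(apply HJ; lra) H3 ltac:(lra) ltac:(lra) ltac:(lra)) as Hq.
  rewrite (HE f (x0 + e) x1 x2 x3) in Hq by lra. exact Hq.
Qed.

Lemma cvx_i : Cvx J (Derive f) -> convex3_on I f.
Proof.
  intros Hc x0 x1 x2 x3 H0 H1 H2 H3 ? ? ?.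
  assert (HJ : forall e, 0 < e < x3 - x2 -> J (x3 - e)).
  { intros e He. apply (int_between I HI x0 _ x3); auto. lra. }
  set (al := fun t => / ((t - x0) * (t - x1) * (t - x2))).
  set (be := fun t => f x0 / ((x0 - x1) * (x0 - x2) * (x0 - t))
    + f x1 / ((x1 - x0) * (x1 - x2) * (x1 - t)) + f x2 / ((x2 - x0) * (x2 - x1) * (x2 - t))).
  assert (Ha : conv0 (fun e => al (x3 - e)) (al x3)).
  { apply conv0_exd_m. unfold al. auto_derive. nz. }
  assert (Hb : conv0 (fun e => be (x3 - e)) (be x3)).
  { apply conv0_exd_m. unfold be. auto_derive. nz. }
  assert (Hf : conv0 (fun e => f (x3 - e)) (f x3)).
  { apply (conv0_within_m I f x3 (x3 - x2)); [apply Hcont; auto|lra|].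
    intros e He. apply int_in. apply HJ; auto. }
  assert (Hall := conv0_plus _ _ _ _ (conv0_mult _ _ _ _ Hf Ha) Hb).
  simpl in Hall.
  rewrite (HE3 f x0 x1 x2 x3) by lra.
  apply (conv0_le (fun _ => 0) _ 0 _ (conv0_const 0) Hall).
  exists (x3 - x2). split; [lra|]. intros e He.
  pose proof (step1 Hc x0 x1 x2 (x3 - e) H0 ltac:(apply HJ; lra) ltac:(lra) ltac:(lra) ltac:(lra)) as Hq.
  rewrite (HE3 f x0 x1 x2 (x3 - e)) in Hq by lra. exact Hq.
Qed.
End S.

Section Smooth.
Variable I : R -> Prop.
Variable f : R -> R.
Hypothesis HI : is_interval I.
Hypothesis HC1 : C1_on_interior I f.
Let J := interior_of I.
Variables F FF : R -> R.
Hypothesis HF : forall x, J x -> is_derive F x (f x).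
Hypothesis HFF : forall x, J x -> is_derive FF x (F x).
Variable d : R.
Hypothesis Hd : 0 < d.

Definition h1 t := (f (t + 2 * d) - 2 * f (t + d) + f t) / (d * d).
Definition h2 t := (F (t + 2 * d) - 2 * F (t + d) + F t) / (d * d).
Definition f2 t := (FF (t + 2 * d) - 2 * FF (t + d) + FF t) / (d * d).
Definition Dd t := Derive f t - 2 * Derive f (t + d) + Derive f (t + 2 * d).

Ltac etaD := repeat match goal with |- context [Derive (fun x => ?G x) ?y] =>
    change (Derive (fun x => G x) y) with (Derive G y) end.
Ltac exd H := repeat split; try (eexists; apply H; assumption); try (apply Rgt_not_eq; apply Rmult_lt_0_compat; lra).

Lemma d_f2 t : J t -> J (t + 2 * d) -> is_derive f2 t (h2 t).
Proof.
  intros H0 H2. assert (H1 : J (t + d)) by (apply (Jc I HI t _ (t + 2 * d)); auto; lra).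
  unfold f2, h2. auto_derive. exd HFF. etaD.
  rewrite (is_derive_unique _ _ _ (HFF _ H0)), (is_derive_unique _ _ _ (HFF _ H1)),
    (is_derive_unique _ _ _ (HFF _ H2)). field. lra.
Qed.

Lemma d_h2 t : J t -> J (t + 2 * d) -> is_derive h2 t (h1 t).
Proof.
  intros H0 H2. assert (H1 : J (t + d)) by (apply (Jc I HI t _ (t + 2 * d)); auto; lra).
  unfold h2, h1. auto_derive. exd HF. etaD.
  rewrite (is_derive_unique _ _ _ (HF _ H0)), (is_derive_unique _ _ _ (HF _ H1)),
    (is_derive_unique _ _ _ (HF _ H2)). field. lra.
Qed.

Lemma d_h1 t : J t -> J (t + 2 * d) -> is_derive h1 t (Dd t / (d * d)).
Proof.
  intros H0 H2. assert (H1 : J (t + d)) by (apply (Jc I HI t _ (t + 2 * d)); auto; lra).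
  pose proof (fder I f HC1 _ H0). pose proof (fder I f HC1 _ H1). pose proof (fder I f HC1 _ H2).
  unfold h1, Dd. auto_derive. repeat split; auto; apply Rgt_not_eq; apply Rmult_lt_0_compat; lra.
  etaD. field. lra.
Qed.

Lemma T2_neg u v : u < v -> J u -> J (v + 2 * d) -> (forall t, u <= t <= v -> Dd t < 0) ->
  (h2 u + h2 v) / 2 - (f2 v - f2 u) / (v - u) < 0.
Proof.
  intros Huv Hu Hv HD.
  set (c := (u + v) / 2). set (r := (v - u) / 2).
  assert (Hr : 0 < r) by (unfold r; lra).
  replace u with (c - r) in * by (unfold c, r; field).
  replace v with (c + r) in * by (unfold c, r; field).
  clearbody c r. clear u v Huv.
  assert (HJ : forall t, c - r <= t <= c + r + 2 * d -> J t).
  { intros t Ht. apply (Jc I HI (c - r) t (c + r + 2 * d)); auto. }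
  set (chi := fun t => h2 (c + t) + h2 (c - t)).
  set (dchi := fun t => h1 (c + t) - h1 (c - t)).
  assert (Dchi : forall t, 0 <= t <= r -> is_derive chi t (dchi t)).
  { intros t Ht. unfold chi, dchi.
    assert (E1 := d_h2 (c + t) ltac:(apply HJ; lra) ltac:(apply HJ; lra)).
    assert (E2 := d_h2 (c - t) ltac:(apply HJ; lra) ltac:(apply HJ; lra)).
    apply (is_derive_ext (fun t => h2 (c + t) + h2 (c - t))); [intros; reflexivity|].
    auto_derive. repeat split; eexists; eauto.
    etaD. unfold Rminus in *. rewrite (is_derive_unique _ _ _ E1).
    rewrite (is_derive_unique _ _ _ E2). ring. }
  assert (Nchi : forall t, 0 < t <= r -> dchi t < 0).
  { intros t Ht. unfold dchi.
    destruct (mvt_open h1 (fun x => Dd x / (d * d)) (c - t) (c + t)) as [z [Ez Hz]]; [lra| |].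
    { intros x Hx. apply d_h1; apply HJ; lra. }
    assert (Dd z < 0) by (apply HD; lra).
    assert (Dd z / (d * d) < 0).
    { unfold Rdiv. apply Rmult_neg_pos; auto. apply Rinv_0_lt_compat. nra. }
    rewrite Ez. apply Rmult_neg_pos; auto. lra. }
  set (psi := fun t => t * (h2 (c - r) + h2 (c + r)) - (f2 (c + t) - f2 (c - t))).
  set (dpsi := fun t => h2 (c - r) + h2 (c + r) - chi t).
  assert (Dpsi : forall t, 0 <= t <= r -> is_derive psi t (dpsi t)).
  { intros t Ht. unfold psi, dpsi, chi.
    assert (E1 := d_f2 (c + t) ltac:(apply HJ; lra) ltac:(apply HJ; lra)).
    assert (E2 := d_f2 (c - t) ltac:(apply HJ; lra) ltac:(apply HJ; lra)).
    auto_derive. repeat split; eexists; eauto.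
    etaD. unfold Rminus in *. rewrite (is_derive_unique _ _ _ E1).
    rewrite (is_derive_unique _ _ _ E2). ring. }
  destruct (mvt_open psi dpsi 0 r) as [x [Ex Hx]]; [lra|auto|].
  destruct (mvt_open chi dchi x r) as [y [Ey Hy]]; [lra|intros; apply Dchi; lra|].
  assert (Hneg : dchi y < 0) by (apply Nchi; lra).
  assert (Hdp : dpsi x < 0).
  { unfold dpsi. replace (h2 (c - r) + h2 (c + r)) with (chi r) by (unfold chi; ring).
    assert (0 < r - x) by lra. nra. }
  assert (Hps : psi r < psi 0) by nra.
  unfold psi in Hps. replace (c + 0) with c in Hps by ring. replace (c - 0) with c in Hps by ring.
  replace (c + r - (c - r)) with (2 * r) by ring.
  apply (Rmult_lt_reg_r (2 * r)). lra. rewrite Rmult_0_l.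
  replace (((h2 (c - r) + h2 (c + r)) / 2 - (f2 (c + r) - f2 (c - r)) / (2 * r)) * (2 * r))
    with (r * (h2 (c - r) + h2 (c + r)) - (f2 (c + r) - f2 (c - r))) by (field; lra).
  lra.
Qed.

Lemma P2_nn (Hiii : forall a b, J a -> J b -> a < b ->
   (f b - f a) / (b - a) <= / 2 * ((Derive f a + Derive f b) / 2 + Derive f ((a + b) / 2)))
  a b m : a < b -> m = (a + b) / 2 -> J a -> J (b + 2 * d) ->
  0 <= (h2 a + 2 * h2 m + h2 b) / 4 - (f2 b - f2 a) / (b - a).
Proof.
  intros Hab Hm Ha Hb.
  assert (HJ : forall w, 0 <= w <= 2 * d -> J (a + w) /\ J (m + w) /\ J (b + w)).
  { intros w Hw. repeat split; apply (Jc I HI a _ (b + 2 * d)); auto; subst m; lra. }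
  set (Phi := fun w => (f (a + w) + 2 * f (m + w) + f (b + w)) / 4 - (F (b + w) - F (a + w)) / (b - a)).
  set (dPhi := fun w => (Derive f (a + w) + 2 * Derive f (m + w) + Derive f (b + w)) / 4
      - (f (b + w) - f (a + w)) / (b - a)).
  assert (DPhi : forall w, 0 <= w <= 2 * d -> is_derive Phi w (dPhi w)).
  { intros w Hw. destruct (HJ w Hw) as [J1 [J2 J3]].
    pose proof (fder I f HC1 _ J1). pose proof (fder I f HC1 _ J2). pose proof (fder I f HC1 _ J3).
    unfold Phi, dPhi. auto_derive.
    { repeat split; auto; try (eexists; apply HF; assumption); try lra. }
    etaD. rewrite (is_derive_unique _ _ _ (HF _ J1)), (is_derive_unique _ _ _ (HF _ J3)).
    field. lra. }
  assert (Pdphi : forall w, 0 <= w <= 2 * d -> 0 <= dPhi w).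
  { intros w Hw. destruct (HJ w Hw) as [J1 [J2 J3]].
    pose proof (Hiii (a + w) (b + w) J1 J3 ltac:(lra)) as H.
    replace ((a + w + (b + w)) / 2) with (m + w) in H by (subst m; field).
    replace (b + w - (a + w)) with (b - a) in H by ring.
    unfold dPhi. lra. }
  assert (Mono : forall w1 w2, 0 <= w1 <= w2 -> w2 <= 2 * d -> Phi w1 <= Phi w2).
  { intros w1 w2 H1 H2. apply (incr_deriv Phi dPhi); try lra.
    - intros; apply DPhi; lra.
    - intros; apply Pdphi; lra. }
  set (Phi2 := fun w => (F (a + w) + 2 * F (m + w) + F (b + w)) / 4 - (FF (b + w) - FF (a + w)) / (b - a)).
  assert (DPhi2 : forall w, 0 <= w <= 2 * d -> is_derive Phi2 w (Phi w)).
  { intros w Hw. destruct (HJ w Hw) as [J1 [J2 J3]].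
    unfold Phi2, Phi. auto_derive.
    { repeat split; auto; try (eexists; first [apply HF|apply HFF]; assumption); try lra. }
    etaD. rewrite (is_derive_unique _ _ _ (HF _ J1)), (is_derive_unique _ _ _ (HF _ J2)),
      (is_derive_unique _ _ _ (HF _ J3)), (is_derive_unique _ _ _ (HFF _ J1)),
      (is_derive_unique _ _ _ (HFF _ J3)).
    field. lra. }
  assert (EPhi2 : forall w, Phi2 w = (F (a + w) + 2 * F (m + w) + F (b + w)) / 4
     - (FF (b + w) - FF (a + w)) / (b - a)) by reflexivity.
  clearbody Phi2 Phi.
  set (Psi := fun s => Phi2 (s + d) - Phi2 s).
  assert (Hpsi : Psi 0 <= Psi d).
  { apply (incr_deriv Psi (fun s => Phi (s + d) - Phi s)); try lra.
    - intros s Hs. unfold Psi.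
      assert (E1 := DPhi2 (s + d) ltac:(lra)). assert (E2 := DPhi2 s ltac:(lra)).
      auto_derive. repeat split; eexists; eauto.
      etaD. rewrite (is_derive_unique _ _ _ E1), (is_derive_unique _ _ _ E2). ring.
    - intros s Hs. assert (Phi s <= Phi (s + d)) by (apply Mono; lra). lra. }
  unfold Psi in Hpsi. clear Psi DPhi2 Mono.
  rewrite !EPhi2 in Hpsi.
  replace (d + d) with (2 * d) in Hpsi by ring.
  replace (0 + d) with d in Hpsi by ring.
  rewrite !Rplus_0_r in Hpsi.
  unfold h2, f2.
  assert (Hdd : 0 < d * d) by nra.
  match goal with |- 0 <= ?X => replace X with
   ((((F (a + 2 * d) + 2 * F (m + 2 * d) + F (b + 2 * d)) / 4 - (FF (b + 2 * d) - FF (a + 2 * d)) / (b - a)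
     - ((F (a + d) + 2 * F (m + d) + F (b + d)) / 4 - (FF (b + d) - FF (a + d)) / (b - a)))
     - ((F (a + d) + 2 * F (m + d) + F (b + d)) / 4 - (FF (b + d) - FF (a + d)) / (b - a)
     - ((F a + 2 * F m + F b) / 4 - (FF b - FF a) / (b - a)))) / (d * d)) by (field; lra) end.
  apply Rmult_le_pos; [lra|]. left. apply Rinv_0_lt_compat. auto.
Qed.
End Smooth.

Lemma cont_eps (g : R -> R) p : continuity_pt g p ->
  forall eps, 0 < eps -> exists al, 0 < al /\ forall x, Rabs (x - p) < al -> Rabs (g x - g p) < eps.
Proof.
  intros Hc eps He. destruct (Hc eps He) as [al [Hal H]].
  exists al; split; auto. intros x Hx.
  destruct (Req_dec x p) as [->|Hne]. { rewrite Rminus_diag, Rabs_R0; auto. }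
  apply (H x). split. split. constructor. intro; apply Hne; auto. simpl. unfold R_dist. auto.
Qed.

Section S.
Variable I : R -> Prop.
Variable f : R -> R.
Hypothesis HI : is_interval I.
Hypothesis HC1 : C1_on_interior I f.
Let J := interior_of I.

Lemma antider (phi : R -> R) (phic : forall x, J x -> continuous phi x) c (Hc : J c) :
  forall x, J x -> is_derive (fun y => RInt phi c y) x (phi x).
Proof.
  intros x Hx. apply (is_derive_RInt phi (fun y => RInt phi c y) c x); [|apply phic; auto].
  destruct (int_open I x Hx) as [e [He HJ]].
  exists (mkposreal e He). intros y Hy.
  assert (Jy : J y).
  { apply HJ. unfold ball in Hy; simpl in Hy; unfold AbsRing_ball, abs, minus, plus, opp in Hy; simpl in Hy.
    exact Hy. }
  apply (RInt_correct (V := R_CompleteNormedModule)). apply (ex_RInt_continuous (V := R_CompleteNormedModule)). intros z Hz. apply phic.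
  apply (Jc I HI (Rmin c y) z (Rmax c y)); auto.
  - unfold Rmin; destruct (Rle_dec c y); auto.
  - unfold Rmax; destruct (Rle_dec c y); auto.
Qed.

Lemma iii_mid (Hiii : forall a b, J a -> J b -> a < b ->
   (f b - f a) / (b - a) <= / 2 * ((Derive f a + Derive f b) / 2 + Derive f ((a + b) / 2))) :
  forall t r, 0 < r -> J (t - r) -> J (t + r) -> Derive f t <= (Derive f (t - r) + Derive f (t + r)) / 2.
Proof.
  intros t r Hr Jm Jp.
  destruct (Rle_or_lt (Derive f t) ((Derive f (t - r) + Derive f (t + r)) / 2)) as [|Hlt]; auto.
  exfalso.
  set (t0 := t - r). set (d := r).
  assert (Jt : J t) by (apply (Jc I HI (t - r) t (t + r)); auto; lra).
  set (g := Derive f).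
  set (V := g t0 - 2 * g (t0 + d) + g (t0 + 2 * d)).
  assert (HV : V < 0).
  { unfold V, t0, d, g. replace (t - r + r) with t by ring. replace (t - r + 2 * r) with (t + r) by ring. lra. }
  destruct (cont_eps g t0 (gcont I f HC1 t0 Jm) (- V / 4) ltac:(lra)) as [a1 [Ha1 C1]].
  destruct (cont_eps g (t0 + d) (gcont I f HC1 (t0 + d) ltac:(unfold t0, d; replace (t - r + r) with t by ring; auto)) (- V / 4) ltac:(lra)) as [a2 [Ha2 C2]].
  destruct (cont_eps g (t0 + 2 * d) (gcont I f HC1 (t0 + 2 * d) ltac:(unfold t0, d; replace (t - r + 2 * r) with (t + r) by ring; auto)) (- V / 4) ltac:(lra)) as [a3 [Ha3 C3]].
  assert (J2 : J (t0 + 2 * d)) by (unfold t0, d; replace (t - r + 2 * r) with (t + r) by ring; auto).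
  destruct (int_open I t0 Jm) as [e1 [He1 O1]].
  destruct (int_open I (t0 + 2 * d) J2) as [e2 [He2 O2]].
  set (eta := Rmin (Rmin a1 a2) (Rmin a3 (Rmin e1 e2)) / 2).
  assert (Heta : 0 < eta) by (assert (0 < Rmin (Rmin a1 a2) (Rmin a3 (Rmin e1 e2))) by (repeat apply Rmin_glb_lt; lra); unfold eta; lra).
  assert (Heta2 : eta < a1 /\ eta < a2 /\ eta < a3 /\ eta < e1 /\ eta < e2).
  { unfold eta.
    pose proof (Rmin_l (Rmin a1 a2) (Rmin a3 (Rmin e1 e2))). pose proof (Rmin_r (Rmin a1 a2) (Rmin a3 (Rmin e1 e2))).
    pose proof (Rmin_l a1 a2). pose proof (Rmin_r a1 a2). pose proof (Rmin_l a3 (Rmin e1 e2)).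
    pose proof (Rmin_r a3 (Rmin e1 e2)). pose proof (Rmin_l e1 e2). pose proof (Rmin_r e1 e2). lra. }
  assert (HD : forall x, t0 - eta <= x <= t0 + eta -> Dd f d x < 0).
  { intros x Hx. unfold Dd. fold g.
    assert (Rabs (x - t0) < a1) by (apply Rabs_def1; lra).
    assert (Rabs (x + d - (t0 + d)) < a2) by (apply Rabs_def1; lra).
    assert (Rabs (x + 2 * d - (t0 + 2 * d)) < a3) by (apply Rabs_def1; lra).
    specialize (C1 x ltac:(auto)). specialize (C2 (x + d) ltac:(auto)). specialize (C3 (x + 2 * d) ltac:(auto)).
    apply Rabs_def2 in C1. apply Rabs_def2 in C2. apply Rabs_def2 in C3. unfold V in *. lra. }
  assert (Ja : J (t0 - eta)) by (apply O1; apply Rabs_def1; lra).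
  assert (Jb : J (t0 + eta + 2 * d)) by (apply O2; apply Rabs_def1; lra).
  assert (Hfc : forall x, J x -> continuous f x).
  { intros x Hx. exact (@ex_derive_continuous R_AbsRing R_NormedModule f x (fder I f HC1 x Hx)). }
  set (F := fun y => RInt f t0 y).
  assert (HF : forall x, J x -> is_derive F x (f x)) by (apply antider; auto).
  assert (HFc : forall x, J x -> continuous F x).
  { intros x Hx. exact (@ex_derive_continuous R_AbsRing R_NormedModule F x (ex_intro _ _ (HF x Hx))). }
  set (FF := fun y => RInt F t0 y).
  assert (HFF : forall x, J x -> is_derive FF x (F x)) by (apply antider; auto).
  clearbody F FF.
  assert (Hd : 0 < d) by (unfold d; lra).
  pose proof (P2_nn I f HI HC1 F FF HF HFF d Hd Hiii (t0 - eta) (t0 + eta) t0 ltac:(lra) ltac:(field) Ja Jb) as P.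
  pose proof (T2_neg I f HI HC1 F FF HF HFF d Hd (t0 - eta) t0 ltac:(lra) Ja J2
     ltac:(intros x Hx; apply HD; lra)) as T1.
  pose proof (T2_neg I f HI HC1 F FF HF HFF d Hd t0 (t0 + eta) ltac:(lra) Jm Jb
     ltac:(intros x Hx; apply HD; lra)) as T2.
  replace (t0 + eta - (t0 - eta)) with (2 * eta) in P by ring.
  replace (t0 - (t0 - eta)) with eta in T1 by ring.
  replace (t0 + eta - t0) with eta in T2 by ring.
  match type of P with 0 <= ?X => assert (E : X =
    (((h2 F d (t0 - eta) + h2 F d t0) / 2 - (f2 FF d t0 - f2 FF d (t0 - eta)) / eta) +
     ((h2 F d t0 + h2 F d (t0 + eta)) / 2 - (f2 FF d (t0 + eta) - f2 FF d t0) / eta)) / 2) by (field; lra) end.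
  lra.
Qed.
End S.

Theorem theorem4 (I : R -> Prop) (f : R -> R) :
  is_interval I ->
  continuous_on_set I f ->
  C1_on_interior I f ->
  (convex3_on I f <->
   (forall a b, interior_of I a -> interior_of I b -> a < b ->
      Derive f ((a + b) / 2) <= (f b - f a) / (b - a)))
  /\
  (convex3_on I f <->
   (forall a b, interior_of I a -> interior_of I b -> a < b ->
      (f b - f a) / (b - a) <=
        / 2 * ((Derive f a + Derive f b) / 2 + Derive f ((a + b) / 2)))).
Proof.
  intros HI Hc HC1. split; split.
  - intros H3. apply (cvx_ii I f HI HC1). apply (i_cvx I f HI HC1 H3).
  - intros Hii. apply (cvx_i I f HI Hc HC1). apply (ii_cvx I f HI HC1 Hii).
  - intros H3. apply (cvx_iii I f HI HC1). apply (i_cvx I f HI HC1 H3).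
  - intros Hiii. apply (cvx_i I f HI Hc HC1).
    apply mid_cvx.
    + apply (Jc I HI).
    + apply (gcont I f HC1).
    + apply (iii_mid I f HI HC1 Hiii).
Qed.
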